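(* For all constants $K_1,K_2>0$ there is a constant $c=c(K_1,K_2)>0$ such that the following holds. Let $A$ be a set of $N$ positive integers and let $g=\gcd(A)$ be the greatest common divisor of all elements of $A$. Suppose that $a/g<N^{K_1}$ for every $a\in A$, that $A\subseteq B.B=\{bb': b,b'\in B\}$ for some finite set $B$ of integers, and that $$\omega\Big(\prod_{a\in A}\frac{a}{g},\,K_2N\Big)\ge M.$$ Then $|B|\ge cM$.
   Context: For a natural number $m$ and a real number $x$, $\omega(m,x)$ denotes the number of distinct prime factors $p$ of $m$ with $p\ge x$. *)

(* Defs.v *)
From Stdlib Require Export Reals.
From mathcomp Require Export all_boot all_order all_algebra.

Definition omega (m : nat) (x : R) : nat :=
  size [seq p <- primes m | if Rle_dec x (INR p) then true else false].

(* gcd of all elements of a finite list of naturals (gcd of empty list = 0). *)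
Definition gcd_seq (A : seq nat) : nat := \big[gcdn/0%N]_(a <- A) a.

(* Main.v *)
Require Import Defs.
From Stdlib Require Import Lra Psatz.

Lemma prod_primes_dvd (s : seq nat) m : (0 < m)%N -> uniq s -> all prime s ->
  (forall p, p \in s -> p %| m) -> \prod_(p <- s) p %| m.
Proof.
move=> m0; elim: s => [|p s IH] /=; first by rewrite big_nil dvd1n.
case/andP=> ps us /andP[pp ap] H.
rewrite big_cons Gauss_dvd; last first.
  rewrite prime_coprime // Euclid_dvd_prod // big_has.
  apply/negP=> /hasP[q qs pq].
  move/allP: ap => /(_ q qs) qp.
  have: p == q by rewrite -(dvdn_prime2 pp qp).
  by move/eqP=> E; rewrite E qs in ps.
by rewrite H ?mem_head //=; apply: IH => // q qs; apply: H; rewrite inE qs orbT.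
Qed.

Local Open Scope R_scope.

Lemma prod_ge_pow (s : seq nat) (y : R) : 0 <= y ->
  (forall q, q \in s -> y <= INR q) -> y ^ size s <= INR (\prod_(q <- s) q).
Proof.
move=> y0; elim: s => [|q s IH] H /=; first by rewrite big_nil /=; lra.
rewrite big_cons -multE mult_INR.
have h1 : y <= INR q by apply: H; rewrite mem_head.
have h2 : y ^ size s <= INR (\prod_(q <- s) q).
  by apply: IH => x xs; apply: H; rewrite inE xs orbT.
have h3 : 0 <= y ^ size s by apply: pow_le.
apply: Rmult_le_compat => //.
Qed.

Lemma real_arith (t L l2 k a K1 : R) : 0 <= t -> 0 < l2 -> l2 <= L -> k + a <= L ->
  0 <= a -> 0 < K1 -> t * L < K1 * a -> t <= 2 * K1 + 2 * K1 * Rabs k / l2.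
Proof.
move=> t0 l20 h1 h2 a0 k0 h.
have hk : 0 <= Rabs k by apply: Rabs_pos.
have hk2 : - Rabs k <= k.
  have := Rle_abs (- k); rewrite Rabs_Ropp; lra.
set X := 2 * K1 * Rabs k / l2.
have hX : X * l2 = 2 * K1 * Rabs k by rewrite /X; field; lra.
have hX0 : 0 <= X by rewrite /X; apply: Rmult_le_pos; [nra | left; apply: Rinv_0_lt_compat].
destruct (Rle_dec a (2 * Rabs k)) as [ha|ha].
  have : t * l2 < X * l2 by nra.
  nra.
have : t * (a / 2) < K1 * a by nra.
nra.
Qed.

Lemma ln_le (x y : R) : 0 < x -> x <= y -> ln x <= ln y.
Proof. move=> hx [h|->]; [left; exact: ln_increasing | right; reflexivity]. Qed.

Lemma count_bound (K1 K2 : R) (N m : nat) : 0 < K1 -> 0 < K2 -> (0 < N)%N -> (0 < m)%N ->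
  INR m < Rpower (INR N) K1 ->
  INR (size [seq q <- primes m | if Rle_dec (K2 * INR N) (INR q) then true else false])
   <= 2 * K1 + 2 * K1 * Rabs (ln K2) / ln 2.
Proof.
move=> hK1 hK2 hN hm hmN.
set S := [seq q <- primes m | _].
set y := Rmax 2 (K2 * INR N).
have y2 : 2 <= y by apply: Rmax_l.
have yK : K2 * INR N <= y by apply: Rmax_r.
have Nge1 : 1 <= INR N by apply: (le_INR 1); apply/leP.
have hyq : forall q, q \in S -> y <= INR q.
  move=> q; rewrite mem_filter; case: Rle_dec => // hq /= qm.
  apply: Rmax_lub => //.
  move: qm; rewrite mem_primes => /and3P[qp _ _].
  by apply: (le_INR 2); apply/leP; apply: prime_gt1.
have hprod : (\prod_(q <- S) q <= m)%N.
  apply: dvdn_leq => //; apply: prod_primes_dvd => //.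
  - by rewrite filter_uniq // primes_uniq.
  - by apply/allP => q; rewrite mem_filter => /andP[_]; rewrite mem_primes => /and3P[].
  - by move=> q; rewrite mem_filter => /andP[_]; rewrite mem_primes => /and3P[].
have h1 : y ^ size S < Rpower (INR N) K1.
  have h0 := prod_ge_pow S y (Rlt_le _ _ (Rlt_le_trans 0 2 y ltac:(lra) y2)) hyq.
  have h3 : INR (\prod_(q <- S) q) <= INR m by apply: le_INR; exact/leP.
  lra.
have ypos : 0 < y by lra.
have h2 := ln_increasing _ _ (pow_lt _ (size S) ypos) h1.
rewrite ln_pow // /Rpower ln_exp in h2.
have l2 : 0 < ln 2 by rewrite -ln_1; apply: ln_increasing; lra.
have hL1 : ln 2 <= ln y by apply: ln_le; lra.
have hL2 : ln K2 + ln (INR N) <= ln y.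
  rewrite -ln_mult //; last lra; apply: ln_le => //; apply: Rmult_lt_0_compat; lra.
have ha : 0 <= ln (INR N) by rewrite -ln_1; apply: ln_le; lra.
apply: (real_arith _ (ln y) _ _ (ln (INR N))) => //; apply: pos_INR.
Qed.

Lemma final_arith (M P n Cn : R) : M <= P -> P <= n * Cn -> 0 <= Cn -> 0 <= n ->
  1 / (Cn + 1) * M <= n.
Proof.
move=> h1 h2 h3 h4.
have hp : 0 < Cn + 1 by lra.
apply: (Rmult_le_reg_l (Cn + 1)) => //.
rewrite -Rmult_assoc.
have -> : (Cn + 1) * (1 / (Cn + 1)) = 1 by field; lra.
nra.
Qed.
From mathcomp Require Import ring lra.
Import GRing.Theory Num.Theory.

Lemma size_flatten_le (ss : seq (seq nat)) C :
  all (fun s => size s <= C)%N ss -> (size (flatten ss) <= size ss * C)%N.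
Proof.
elim: ss => //= s ss IH /andP[h1 h2]; rewrite size_cat mulSn; exact: leq_add h1 (IH h2).
Qed.

Local Open Scope ring_scope.

Lemma sum_delta n (j1 : 'I_n) (f : 'I_n -> rat) : \sum_j (j1 == j)%:R * f j = f j1.
Proof.
rewrite (bigD1 j1) //= eqxx mul1r big1 ?addr0 // => j /negPf; rewrite eq_sym => ->.
by rewrite mul0r.
Qed.

Lemma core (L : pred nat) (A : seq nat) (B : seq int) (g Cn : nat) :
  (forall a, a \in A -> [/\ 0 < g, g %| a & 0 < a %/ g]%N) ->
  (forall a, a \in A -> exists b b' : int, [/\ b \in B, b' \in B & a%:Z = b * b']) ->
  (forall a, a \in A -> size [seq q <- primes (a %/ g) | L q] <= Cn)%N ->
  (size [seq q <- primes (\prod_(a <- A) (a %/ g)) | L q] <= size B * Cn)%N.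
Proof.
move=> hg hB hC.
set N := size A; set n := size B.
pose a_ (i : 'I_N) := nth 0%N A i.
have aA : forall i, a_ i \in A := fun i => mem_nth 0%N (ltn_ord i).
pose e (i : 'I_N) := [pick jj : 'I_n * 'I_n | (a_ i)%:Z == B`_jj.1 * B`_jj.2].
pose W : 'M[rat]_(N, n) := \matrix_(i, j)
   (if e i is Some jj then (jj.1 == j)%:R + (jj.2 == j)%:R else 0).
pose r := \rank W. pose F := maxrankfun W.
pose Sf x := [seq q <- primes (x %/ g) | L q].
pose fl := flatten [seq Sf (a_ (F k)) | k <- enum 'I_r].
have Hfl : (size fl <= n * Cn)%N.

  apply: leq_trans (size_flatten_le _ Cn _) _.
    by apply/allP => s /mapP[k _ ->]; apply: hC.
  by rewrite size_map size_enum_ord leq_mul2r rank_leq_col orbT.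
apply: leq_trans Hfl.
apply: uniq_leq_size; first by rewrite filter_uniq // primes_uniq.
move=> p; rewrite mem_filter => /andP[Lp pQ].
case: (boolP [exists k : 'I_r, p \in Sf (a_ (F k))]) => [/existsP[k pk] | /existsPn nk].
  by apply/flatten_mapP; exists k => //; rewrite mem_enum.
exfalso.
move: pQ; rewrite mem_primes => /and3P[pp Q0 pdQ].
move: pdQ; rewrite Euclid_dvd_prod // big_has => /hasP[a aA' pa].
have iA : (index a A < N)%N by rewrite index_mem.
pose i0 : 'I_N := Ordinal iA.
have ai0 : a_ i0 = a by rewrite /a_ /= nth_index.
pose u : 'cV[rat]_n := \col_j ((logn p (absz B`_j))%:R - (logn p g)%:R / 2).
have key : forall i, (W *m u) i 0 = (logn p (a_ i %/ g))%:R.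
  move=> i; rewrite mxE.
  have [b [b' [bB b'B ab]]] := hB _ (aA i).
  case E: (e i) => [[j1 j2]|]; last first.
    exfalso; move: E; rewrite /e; case: pickP => // none _.
    have h1 : (index b B < n)%N by rewrite index_mem.
    have h2 : (index b' B < n)%N by rewrite index_mem.
    have := none (Ordinal h1, Ordinal h2).
    by rewrite /= !nth_index // ab eqxx.
  have hj : (a_ i)%:Z = B`_j1 * B`_j2.
    by move: E; rewrite /e; case: pickP => // [[x1 x2]] /eqP hx [<- <-].
  under eq_bigr => j _ do rewrite !mxE E mulrDl.
  rewrite big_split /= !sum_delta.
  have [g0 ga ag0] := hg _ (aA i).
  have ha := congr1 absz hj; rewrite abszM /= in ha.
  have apos : (0 < a_ i)%N by rewrite -(divnK ga) muln_gt0 ag0 g0.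
  have b1p : (0 < absz (B`_j1)%R)%N by move: apos; rewrite ha muln_gt0 => /andP[].
  have b2p : (0 < absz (B`_j2)%R)%N by move: apos; rewrite ha muln_gt0 => /andP[].
  have El : (logn p (absz (B`_j1)%R) + logn p (absz (B`_j2)%R) = logn p g + logn p (a_ i %/ g))%N.
    by rewrite -lognM // -ha -lognM // mulnC divnK.
  have E' : ((logn p (absz (B`_j1)%R))%:R + (logn p (absz (B`_j2)%R))%:R
             = (logn p g)%:R + (logn p (a_ i %/ g))%:R :> rat) by rewrite -!natrD El.
  lra.
have zF : forall k, logn p (a_ (F k) %/ g) = 0%N.
  move=> k; have := nk k; rewrite mem_filter Lp /= -logn_gt0 -eqn0Ngt.
  by move/eqP.
have Wu0 : rowsub F W *m u = 0.
  apply/matrixP => k z; rewrite [LHS]mxE.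
  transitivity ((W *m u) (F k) z).
    by rewrite mxE; apply: eq_bigr => j _; rewrite mxE.
  by rewrite (ord1 z) key zF !mxE.
have sub : (W <= rowsub F W)%MS by rewrite (eq_maxrowsub W).
case/submxP: sub => D HD.
have := key i0; rewrite HD -mulmxA Wu0 mulmx0 mxE => /esym/eqP.
rewrite pnatr_eq0 => /eqP lz.
have : (0 < logn p (a_ i0 %/ g))%N.
  rewrite logn_gt0 mem_primes pp ai0 pa andbT.
  by case: (hg a aA') => _ _ ->.
by rewrite lz.
Qed.

Lemma gcd_seq_dvd (A : seq nat) a : a \in A -> (gcd_seq A %| a)%N.
Proof. by move=> aA; rewrite /gcd_seq (big_rem a) //= dvdn_gcdl. Qed.

Lemma prod_factor_pos (A : seq nat) (f : nat -> nat) a : a \in A ->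
  (0 < \prod_(x <- A) f x)%N -> (0 < f a)%N.
Proof. by move=> aA; rewrite (big_rem a) //= muln_gt0 => /andP[]. Qed.

Local Close Scope ring_scope.

Theorem proposition1 :
  forall K1 K2 : R, Rlt 0 K1 -> Rlt 0 K2 ->
  exists c : R, Rlt 0 c /\
    forall (A : seq nat) (B : seq int) (M : R),
      uniq A -> all (fun a => (0 < a)%N) A -> uniq B ->
      (forall a, a \in A ->
         Rlt (INR (a %/ gcd_seq A)) (Rpower (INR (size A)) K1)) ->
      (forall a, a \in A ->
         exists b b' : int, [/\ b \in B, b' \in B & (a%:Z = b * b')%R]) ->
      Rle M (INR (omega (\prod_(a <- A) (a %/ gcd_seq A))
                        (Rmult K2 (INR (size A))))) ->
      Rle (Rmult c M) (INR (size B)).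
Proof.
move=> K1 K2 h1 h2.
have [Cn hCn] := INR_archimed 1 (2 * K1 + 2 * K1 * Rabs (ln K2) / ln 2) Rlt_0_1.
have Cn0 := pos_INR Cn.
exists (1 / (INR Cn + 1)); split.
  apply: Rmult_lt_0_compat; [apply: Rlt_0_1 | apply: Rinv_0_lt_compat].
  exact: (Rle_lt_trans _ _ _ Cn0 (Rlt_plus_1 _)).
move=> A B M uA posA uB hK hB hM.
rewrite /omega in hM.
set g := gcd_seq A in hK hM.
set Q := \prod_(a <- A) (a %/ g) in hM.
have key : (size [seq p <- primes Q | if Rle_dec (K2 * INR (size A)) (INR p) then true else false]
            <= size B * Cn)%N.
  case: (posnP Q) => [Q0 | Qpos]; first by rewrite Q0.
  have hag : forall a, a \in A -> (0 < a %/ g)%N.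
    by move=> a aA; apply: (prod_factor_pos _ (fun x => x %/ g) _ aA Qpos).
  apply: core => // [a aA|a aA].
    have ag := hag a aA.
    have gp : (0 < g)%N.
      by rewrite lt0n; apply/eqP => g0; rewrite g0 divn0 in ag.
    by split => //; apply: gcd_seq_dvd.
  have N0 : (0 < size A)%N by case: (A) aA.
  have hb := count_bound K1 K2 (size A) (a %/ g) h1 h2 N0 (hag a aA) (hK a aA).
  apply/leP; apply: INR_le.
  apply: Rle_trans hb _; rewrite Rmult_1_r in hCn; apply: Rlt_le; exact: hCn.
apply: (final_arith _ (INR (size B * Cn))) => //; last exact: pos_INR.
  apply: Rle_trans hM _; apply: le_INR; exact/leP.
by rewrite -multE mult_INR; apply: Rle_refl.
Qed.
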